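(* Let $R=\bigoplus_{n\ge0}R_n=R_0[R_1]$ be a standard graded Noetherian ring such that $R_0$ is an Artinian local ring with maximal ideal $\mathfrak{m}$ and $\mathfrak{p}:=\mathfrak{m}R$ is a prime ideal. Let $M$ be a finitely generated graded $R$-module with $\operatorname{Ass}_R M=\{\mathfrak{p}\}$. If $M_t\neq 0$ for some $t\in\mathbb{Z}$, then there exists a graded (degree-preserving) injective homomorphism $(R/\mathfrak{p})(-t)\to M$; more precisely, there is a homogeneous $x\in M_t$ with $(0):_R x=\mathfrak{p}$.
   Context: $(R/\mathfrak{p})(-t)$ denotes the shifted graded module with $((R/\mathfrak{p})(-t))_n=(R/\mathfrak{p})_{n-t}$. *)

(* Defs.v *)
From HB Require Import structures.
From mathcomp Require Import all_boot all_order all_algebra.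
Set Implicit Arguments. Unset Strict Implicit. Unset Printing Implicit Defensive.
Import Order.TTheory GRing.Theory Num.Theory.
Local Open Scope ring_scope.

Section CommAlg.
Variable R : comNzRingType.

Definition is_ideal (I : R -> Prop) : Prop :=
  [/\ I 0, (forall x y, I x -> I y -> I (x + y)) &
      (forall r x, I x -> I (r * x))].

Definition prime_ideal (I : R -> Prop) : Prop :=
  [/\ is_ideal I, ~ I 1 & (forall a b, I (a * b) -> I a \/ I b)].

Definition ideal_gen_seq (s : seq R) (x : R) : Prop :=
  exists c : nat -> R, x = \sum_(i < size s) c i * s`_i.

Definition noetherian : Prop :=
  forall I : R -> Prop, is_ideal I ->
    exists s : seq R, forall x, I x <-> ideal_gen_seq s x.

Definition ext_ideal (J : R -> Prop) (x : R) : Prop :=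
  exists (s : seq R) (c : nat -> R),
    (forall i, (i < size s)%N -> J s`_i) /\
    x = \sum_(i < size s) c i * s`_i.

Definition nat_graded_ring (Rg : nat -> R -> Prop) : Prop :=
  [/\ (forall n, Rg n 0 /\ (forall x y, Rg n x -> Rg n y -> Rg n (x - y))),
      Rg 0%N 1,
      (forall i j a b, Rg i a -> Rg j b -> Rg (i + j)%N (a * b)),
      (forall r, exists (f : nat -> R) (N : nat),
          (forall i, Rg i (f i)) /\ r = \sum_(i < N) f i) &
      (forall (f : nat -> R) (N : nat), (forall i, Rg i (f i)) ->
          \sum_(i < N) f i = 0 -> forall i, (i < N)%N -> f i = 0)].

(* standard graded: R = R_0[R_1], i.e. R is generated as an R_0-algebra by R_1 *)
Definition standard_graded (Rg : nat -> R -> Prop) : Prop :=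
  nat_graded_ring Rg /\
  forall S : R -> Prop,
    (forall x, Rg 0%N x -> S x) -> (forall x, Rg 1%N x -> S x) ->
    (forall x y, S x -> S y -> S (x + y)) ->
    (forall x y, S x -> S y -> S (x * y)) ->
    forall r, S r.

Definition ideal0 (Rg : nat -> R -> Prop) (J : R -> Prop) : Prop :=
  [/\ (forall x, J x -> Rg 0%N x), J 0,
      (forall x y, J x -> J y -> J (x + y)) &
      (forall a x, Rg 0%N a -> J x -> J (a * x))].

Definition maximal0 (Rg : nat -> R -> Prop) (m : R -> Prop) : Prop :=
  [/\ ideal0 Rg m, ~ m 1 &
      forall J, ideal0 Rg J -> (forall x, m x -> J x) ->
        (forall x, J x <-> m x) \/ J 1].

Definition local0 (Rg : nat -> R -> Prop) (m : R -> Prop) : Prop :=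
  maximal0 Rg m /\ forall n, maximal0 Rg n -> forall x, n x <-> m x.

Definition artinian0 (Rg : nat -> R -> Prop) : Prop :=
  forall I : nat -> R -> Prop, (forall k, ideal0 Rg (I k)) ->
    (forall k x, I k.+1 x -> I k x) ->
    exists N, forall k, (N <= k)%N -> forall x, I k x <-> I N x.

Variable M : lmodType R.

Definition graded_module (Rg : nat -> R -> Prop) (Mg : int -> M -> Prop) : Prop :=
  [/\ (forall n, Mg n 0 /\ (forall x y, Mg n x -> Mg n y -> Mg n (x - y))),
      (forall i n a x, Rg i a -> Mg n x -> Mg (n + i%:Z)%R (a *: x)),
      (forall x, exists (f : int -> M) (s : seq int),
          uniq s /\ (forall n, Mg n (f n)) /\ x = \sum_(n <- s) f n) &
      (forall (f : int -> M) (s : seq int), uniq s -> (forall n, Mg n (f n)) ->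
          \sum_(n <- s) f n = 0 -> forall n, n \in s -> f n = 0)].

Definition fin_gen_module : Prop :=
  exists s : seq M, forall x, exists c : nat -> R,
    x = \sum_(i < size s) c i *: s`_i.

Definition ann (x : M) (r : R) : Prop := r *: x = 0.

Definition Ass (P : R -> Prop) : Prop :=
  prime_ideal P /\ exists x : M, forall r, P r <-> ann x r.

End CommAlg.

(* Main.v *)
Require Import Defs.
From HB Require Import structures.
From mathcomp Require Import all_boot all_order all_algebra.
From Stdlib Require Import Classical ClassicalEpsilon.
Import Order.TTheory GRing.Theory Num.Theory.
Local Open Scope ring_scope.

Section Aux.
Variables (R : comNzRingType) (M : lmodType R).

Lemma ann_ideal (w : M) : is_ideal (ann w).
Proof.
split; rewrite /ann.
- by rewrite scale0r.
- by move=> a b Ha Hb; rewrite scalerDl Ha Hb addr0.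
- by move=> r a Ha; rewrite -scalerA Ha scaler0.
Qed.

Lemma ann_sum (w : M) (n : nat) (F : 'I_n -> R) :
  (forall i, ann w (F i)) -> ann w (\sum_(i < n) F i).
Proof.
move=> H; have [H0 HD _] := ann_ideal w.
by apply: (big_ind (ann w)) => // i _; apply: H.
Qed.

Lemma max_ann (Q : M -> Prop) : noetherian R -> (exists w, Q w) ->
  exists w, Q w /\ forall w', Q w' -> (forall r, ann w r -> ann w' r) ->
     forall r, ann w' r -> ann w r.
Proof.
move=> HN [w0 Hw0].
apply: NNPP => Hno.
have step : forall w : {w | Q w}, {w' : {w | Q w} |
   (forall r, ann (sval w) r -> ann (sval w') r) /\
   exists r, ann (sval w') r /\ ~ ann (sval w) r}.
  move=> [w Hw]; apply: constructive_indefinite_description.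
  apply: NNPP => H1; apply: Hno; exists w; split => // w' Qw' Hsub r Hr.
  apply: NNPP => Hnr; apply: H1; exists (exist _ w' Qw'); split => //=.
  by exists r.
pose f := fix f (k : nat) : {w | Q w} :=
  if k is k'.+1 then sval (step (f k')) else exist _ w0 Hw0.
have mono1 : forall k r, ann (sval (f k)) r -> ann (sval (f k.+1)) r.
  move=> k r; rewrite /=; case: (step (f k)) => /= w' [H _]; exact: H.
have mono : forall k d r, ann (sval (f k)) r -> ann (sval (f (d + k)%N)) r.
  move=> k d; elim: d => [|d IH] // r Hr; rewrite addSn; apply: mono1; exact: IH.
pose I r := exists k, ann (sval (f k)) r.
have HI : is_ideal I.
  split.
  - by exists 0%N; rewrite /ann scale0r.
  - move=> a b [k1 H1] [k2 H2]; exists (k2 + k1)%N.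
    have [_ HD _] := ann_ideal (sval (f (k2 + k1)%N)).
    apply: HD; first exact: mono.
    rewrite addnC; exact: mono.
  - move=> r a [k H]; exists k; have [_ _ HM] := ann_ideal (sval (f k)); exact: HM.
have [s Hs] := HN I HI.
have Hsi : forall i, (i < size s)%N -> I s`_i.
  move=> i Hi; apply/Hs; exists (fun j => (j == i)%:R).
  rewrite (bigD1 (Ordinal Hi)) //= eqxx mul1r big1 ?addr0 // => j Hj.
  by rewrite (_ : (nat_of_ord j == i) = false) ?mul0r //; apply/negbTE.
have [K HK] : exists K, forall i, (i < size s)%N -> ann (sval (f K)) s`_i.
  suff : forall n, (n <= size s)%N -> exists K, forall i, (i < n)%N -> ann (sval (f K)) s`_i.
    by move/(_ (size s) (leqnn _)).
  elim => [|n IH] Hn; first by exists 0%N.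
  have [K1 H1] := IH (ltnW Hn).
  have [k2 H2] := Hsi n Hn.
  exists (k2 + K1)%N => i; rewrite ltnS leq_eqVlt => /orP [/eqP -> |Hi].
    rewrite addnC; exact: mono.
  exact/mono/H1.
have sub : forall r, I r -> ann (sval (f K)) r.
  move=> r /Hs [c ->]; apply: ann_sum => i.
  have [_ _ HM] := ann_ideal (sval (f K)); exact/HM/HK.
have [_ [r [Hr Hnr]]] := svalP (step (f K)).
apply: Hnr; apply: sub; exists K.+1; exact: Hr.
Qed.
End Aux.

Theorem lemma2p4 (R : comNzRingType) (Rg : nat -> R -> Prop) (m : R -> Prop)
    (M : lmodType R) (Mg : int -> M -> Prop) (t : int) :
  standard_graded Rg ->
  noetherian R ->
  artinian0 Rg ->
  local0 Rg m ->
  prime_ideal (ext_ideal m) ->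
  graded_module Rg Mg ->
  fin_gen_module M ->
  (forall P : R -> Prop, Ass M P <-> (forall r, P r <-> ext_ideal m r)) ->
  (exists x : M, Mg t x /\ x != 0) ->
  exists x : M, Mg t x /\ (forall r : R, ann x r <-> ext_ideal m r).
Proof.
move=> [[HRsub HR1 HRmul _ _] _] HN HA [Hmax Huniq] _ [_ HMg _ _] _ HAss [y [Hy Hy0]].
have R00 : Rg 0%N 0 by case: (HRsub 0%N).
have R0sub : forall a b, Rg 0%N a -> Rg 0%N b -> Rg 0%N (a - b).
  by move=> a b; case: (HRsub 0%N) => _; apply.
have R0add : forall a b, Rg 0%N a -> Rg 0%N b -> Rg 0%N (a + b).
  move=> a b Ha Hb; have := R0sub a (0 - b) Ha (R0sub 0 b R00 Hb).
  by rewrite sub0r opprK.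
have R0mul : forall a b, Rg 0%N a -> Rg 0%N b -> Rg 0%N (a * b).
  move=> a b Ha Hb; exact: (HRmul 0%N 0%N a b Ha Hb).
have [x [[Hxt Hx0] Hxmax]] := @max_ann _ _ (fun w : M => Mg t w /\ w != 0) HN
   (ex_intro _ y (conj Hy Hy0)).
have HQb : forall b, Rg 0%N b -> ~ ann x b -> Mg t (b *: x) /\ b *: x != 0.
  move=> b Hb Hnb; split; last by apply/eqP.
  by have := HMg 0%N t b x Hb Hxt; rewrite addr0.
have Hprime0 : forall a b, Rg 0%N b -> ~ ann x b -> ann x (a * b) -> ann x a.
  move=> a b Hb Hnb Hab.
  apply: (Hxmax _ (HQb b Hb Hnb)).
  - by move=> r; rewrite /ann => Hr; rewrite scalerA mulrC -scalerA Hr scaler0.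
  - by rewrite /ann scalerA.
have [_ annD annM] := @ann_ideal _ _ x.
have ann1 : ~ ann x 1 by rewrite /ann scale1r => /eqP; apply/negP.
pose P0 r := Rg 0%N r /\ ann x r.
have HP0 : maximal0 Rg P0.
  split.
  - split.
    + by move=> r [].
    + by split; rewrite // /ann scale0r.
    + by move=> a b [Ha Ha'] [Hb Hb']; split; [apply: R0add | apply: annD].
    + by move=> a b Ha [Hb Hb']; split; [apply: R0mul | apply: annM].
  - by move=> [].
  move=> J [JR0 J0 JD JM] HPJ.
  case: (classic (exists b, J b /\ ~ P0 b)) => [[b [Jb Hnb]]|Hno]; last first.
    left => r; split => [Jr|]; last exact: HPJ.
    by apply: NNPP => Hr; apply: Hno; exists r.
  right.
  have Hb := JR0 b Jb.
  have Hnb' : ~ ann x b by move=> H; apply: Hnb.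
  have pow : forall k, Rg 0%N (b ^+ k).
    elim=> [|k IH]; first by rewrite expr0.
    by rewrite exprS; apply: R0mul.
  have powne : forall k, ~ ann x (b ^+ k).
    elim=> [|k IH]; first by rewrite expr0.
    by rewrite exprSr => H; apply: IH; apply: (Hprime0 _ b).
  pose I k r := exists u p, Rg 0%N u /\ P0 p /\ r = b ^+ k * u + p.
  have HI : forall k, ideal0 Rg (I k).
    move=> k; split.
    - move=> r [u [p [Hu [[Hp _] ->]]]]; apply: R0add => //; exact: R0mul.
    - exists 0, 0; split => //; split; last by rewrite mulr0 addr0.
      by split; rewrite // /ann scale0r.
    - move=> r1 r2 [u1 [p1 [Hu1 [[Hp1 Hp1'] ->]]]] [u2 [p2 [Hu2 [[Hp2 Hp2'] ->]]]].
      exists (u1 + u2), (p1 + p2); split; first exact: R0add.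
      split; first by split; [apply: R0add | apply: annD].
      by rewrite mulrDr addrACA.
    - move=> a r Ha [u [p [Hu [[Hp Hp'] ->]]]].
      exists (a * u), (a * p); split; first exact: R0mul.
      split; first by split; [apply: R0mul | apply: annM].
      by rewrite mulrDr mulrCA.
  have Hdec : forall k r, I k.+1 r -> I k r.
    move=> k r [u [p [Hu [Hp ->]]]]; exists (b * u), p; split; first exact: R0mul.
    by split => //; rewrite exprSr mulrA.
  have [N HNst] := HA I HI Hdec.
  have := (HNst N.+1 (leqnSn N) (b ^+ N)).2.
  case=> [|u [p [Hu [[Hp Hp'] Heq]]]].
    by exists 1, 0; split; [|split; [split; rewrite // /ann scale0r|rewrite mulr1 addr0]].
  have Ep : (1 - b * u) * b ^+ N = p.
    have E2 : b * u * b ^+ N = b ^+ N.+1 * u by rewrite exprSr [LHS]mulrC mulrA.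
    by rewrite mulrBl mul1r E2 {1}Heq addrAC subrr add0r.
  have H1bu : ann x (1 - b * u).
    by apply: (Hprime0 _ (b ^+ N) (pow N) (powne N)); rewrite Ep.
  have J1 : J (1 - b * u) by apply: HPJ; split => //; apply: R0sub => //; exact: R0mul.
  have J2 : J (u * b) by apply: JM.
  have := JD _ _ J1 J2; by rewrite mulrC subrK.
have Hm := Huniq P0 HP0.
have mx : forall r, m r -> ann x r by move=> r /Hm [].
exists x; split => // r; split; last first.
  move=> [s [c [Hs ->]]]; apply: ann_sum => i; apply: annM; apply: mx.
  exact: Hs.
move=> Hr.
have [w [[[s Ews] Hw0] Hwmax]] :=
  @max_ann _ _ (fun w : M => (exists s, w = s *: x) /\ w != 0) HN
   (ex_intro _ x (conj (ex_intro _ 1 (esym (scale1r x))) Hx0)).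
have Hpr : prime_ideal (ann w).
  split; first exact: (@ann_ideal _ _ w).
    by rewrite /ann scale1r => /eqP; apply/negP.
  move=> a b Hab; case: (classic (ann w b)) => Hb; first by right.
  left; apply: (Hwmax (b *: w)).
  - split; last by apply/eqP.
    by exists (b * s); rewrite Ews scalerA.
  - by move=> r' Hr'; rewrite /ann scalerA mulrC -scalerA Hr' scaler0.
  - by rewrite /ann scalerA.
have := (HAss (ann w)).1 (conj Hpr (ex_intro _ w (fun r => iff_refl _))).
move=> /(_ r) [H _]; apply: H.
by rewrite /ann Ews scalerA mulrC -scalerA Hr scaler0.
Qed.
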